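(* Let $A\in M_N(\{0,1\})$ be primitive. The quantity $\tau(F_A)=\int F_A\,d\tau$ is independent of $\tau\in\mathcal M_{\sigma,e}$ if and only if there is a constant $c>0$ such that for every $n\in\mathbb N$ and every $\gamma=\gamma_1\cdots\gamma_n\in V_A^n$ with $A_{\gamma_n,\gamma_1}=1$, $$\frac1n\sum_{i=1}^nu_{\gamma_i}=c.$$ Moreover, this can happen only for $c=\sum_{i=1}^Np_iu_i$. Further, $F_A$ is constant if and only if all row-sums of $A$ are equal.
   Context: $A\in M_N(\{0,1\})$ primitive; $V_A^n$ is the set of words $\gamma_1\cdots\gamma_n$ over $\{1,\dots,N\}$ with $A_{\gamma_k,\gamma_{k+1}}=1$ for all $k$; $\Omega_A=\{x\in\{1,\dots,N\}^{\mathbb N}:A_{x_n,x_{n+1}}=1\ \forall n\}$ with left shift $\sigma$. $\mathcal M_{\sigma,e}$ denotes the set of $\sigma$-invariant ergodic Borel probability measures on $\Omega_A$. $\lambda_A$ is the Perron–Frobenius eigenvalue, $u>0$ with $Au=\lambda_Au$, $\sum u_i=1$, $v>0$ with $A^Tv=\lambda_Av$, $\sum u_iv_i=1$, $p_i=u_iv_i$, $P_{i,j}=A_{i,j}u_j/(\lambda_Au_i)$, and $F_A(x)=u_{x_1}(1-P_{x_1,x_2})$. *)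

(* Defs.v *)
From HB Require Import structures.
From mathcomp Require Import all_boot all_order all_algebra.
From mathcomp Require Import all_classical all_reals all_analysis.
Set Implicit Arguments. Unset Strict Implicit. Unset Printing Implicit Defensive.
Import Order.TTheory GRing.Theory Num.Theory.
Local Open Scope classical_set_scope.
Local Open Scope ring_scope.

(* The alphabet {1,...,N} is represented by 'I_N with N = n.+1
   (N >= 1 is forced anyway by the normalisation sum_i u_i = 1). *)

Definition zero_one_mx (R : nzRingType) (n : nat) (A : 'M[R]_n.+1) : Prop :=
  forall i j, A i j = 0 \/ A i j = 1.

Definition primitive_mx (R : numDomainType) (n : nat) (A : 'M[R]_n.+1) : Prop :=
  exists k : nat, forall i j, 0 < (A ^+ k) i j.

(* One-sided full shift on N symbols: sequences x_1 x_2 ... stored as x 0, x 1, ... *)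
Definition fullshift (n : nat) := nat -> 'I_n.+1.
HB.instance Definition _ (n : nat) := gen_eqMixin (fullshift n).
HB.instance Definition _ (n : nat) := gen_choiceMixin (fullshift n).
HB.instance Definition _ (n : nat) :=
  isPointed.Build (fullshift n) (fun _ => ord0).

Definition cylinders (n : nat) : set (set (fullshift n)) :=
  [set B | exists (k : nat) (a : 'I_n.+1), B = [set x : fullshift n | x k = a]].

(* Measurable space: sigma-algebra generated by the one-coordinate cylinders
   (= Borel sigma-algebra of the product topology). *)
Notation seqspace n := (g_sigma_algebraType (@cylinders n)).

Definition shift (n : nat) (x : seqspace n) : seqspace n := fun k => x k.+1.

Definition OmegaA (R : nzRingType) (n : nat) (A : 'M[R]_n.+1) : set (seqspace n) :=
  [set x | forall k : nat, A (x k) (x k.+1) = 1].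

(* sigma-invariant ergodic Borel probability measures on Omega_A,
   viewed as probability measures on the full shift carried by Omega_A. *)
Definition invariant_ergodic_on (R : realType) (n : nat) (A : 'M[R]_n.+1)
    (P : probability (seqspace n) R) : Prop :=
  [/\ P (OmegaA A) = 1%E,
      (forall B : set (seqspace n), measurable B ->
          P (@shift n @^-1` B) = P B) &
      (forall B : set (seqspace n), measurable B ->
          @shift n @^-1` B = B -> P B = 0%E \/ P B = 1%E)].

Definition Pmx (R : realType) (n : nat) (A : 'M[R]_n.+1) (lam : R)
    (u : 'cV[R]_n.+1) (i j : 'I_n.+1) : R :=
  A i j * u j ord0 / (lam * u i ord0).

Definition FA (R : realType) (n : nat) (A : 'M[R]_n.+1) (lam : R)
    (u : 'cV[R]_n.+1) (x : seqspace n) : R :=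
  u (x 0%N) ord0 * (1 - Pmx A lam u (x 0%N) (x 1%N)).

Definition admissible_cycle (R : nzRingType) (n m : nat) (A : 'M[R]_n.+1)
    (g : 'I_m.+1 -> 'I_n.+1) : Prop :=
  (forall k : nat, (k < m)%N -> A (g (inord k)) (g (inord k.+1)) = 1) /\
  A (g ord_max) (g ord0) = 1.

Definition cycle_average_const (R : realType) (n : nat) (A : 'M[R]_n.+1)
    (u : 'cV[R]_n.+1) (c : R) : Prop :=
  forall (m : nat) (g : 'I_m.+1 -> 'I_n.+1), admissible_cycle A g ->
    (m.+1%:R)^-1 * (\sum_(i < m.+1) u (g i) ord0) = c.

(* Main.v *)
Require Import Defs.
From HB Require Import structures.
From mathcomp Require Import all_boot all_order all_algebra.
From mathcomp Require Import all_classical all_reals all_analysis.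
From mathcomp Require Import measurable_realfun.
From mathcomp Require Import ring lra.
Import Order.TTheory GRing.Theory Num.Theory.
Local Open Scope classical_set_scope.
Local Open Scope ring_scope.
Set Implicit Arguments. Unset Strict Implicit.


Lemma cyl_meas n k (a : 'I_n.+1) : measurable [set x : seqspace n | x k = a].
Proof. apply: sub_sigma_algebra. by exists k, a. Qed.

Lemma measkl n (T : Type) k l (G : 'I_n.+1 -> 'I_n.+1 -> T) (Y : set T) :
  measurable [set x : seqspace n | Y (G (x k) (x l))].
Proof.
have -> : [set x : seqspace n | Y (G (x k) (x l))] =
   \bigcup_(p : 'I_n.+1 * 'I_n.+1)
     ([set x : seqspace n | x k = p.1] `&` [set x | x l = p.2] `&`
      [set _ | Y (G p.1 p.2)]).
  apply/seteqP; split => x /=.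
    by move=> Yx; exists (x k, x l).
  by move=> [p _ [[-> ->]]].
apply: countable_bigcupT_measurable; first exact: countableP.
move=> p; apply: measurableI; first by apply: measurableI; exact: cyl_meas.
have [Yp|Yp] := pselect (Y (G p.1 p.2)).
  by rewrite (_ : [set _ | _] = setT) ?measurableT //; apply/seteqP; split.
by rewrite (_ : [set _ | _] = set0) ?measurable0 //; apply/seteqP; split.
Qed.

Lemma meas2 n (T : Type) (G : 'I_n.+1 -> 'I_n.+1 -> T) (Y : set T) :
  measurable [set x : seqspace n | Y (G (x 0%N) (x 1%N))].
Proof. exact: (@measkl n T 0%N 1%N G Y). Qed.

Lemma Omega_meas n (R : realType) (A : 'M[R]_n.+1) : measurable (OmegaA A).
Proof.
rewrite (_ : OmegaA A = \bigcap_k [set x : seqspace n | A (x k) (x k.+1) = 1]).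
  by apply: bigcapT_measurable => k; exact: (@measkl n _ k k.+1 (fun a b => A a b) (fun z => z = 1)).
by apply/seteqP; split => x /= H; [move=> k _; apply: H|move=> k; exact: H].
Qed.

Lemma meas2_fun n (R : realType) (G : 'I_n.+1 -> 'I_n.+1 -> R) :
  measurable_fun setT (fun x : seqspace n => ((G (x 0%N) (x 1%N))%:E : \bar R)).
Proof.
move=> _ Y mY; rewrite setTI.
have := (@meas2 n _ (fun a b => ((G a b)%:E : \bar R)) Y).
by [].
Qed.

Definition S2 n (a b : 'I_n.+1) : set (seqspace n) :=
  [set x | x 0%N = a /\ x 1%N = b].
Arguments S2 {n}.

Lemma S2_meas n a b : measurable (@S2 n a b).
Proof.
rewrite /S2 (_ : [set x | _] = [set x : seqspace n | x 0%N = a] `&` [set x | x 1%N = b]).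
  by apply: measurableI; exact: cyl_meas.
by apply/seteqP; split => x.
Qed.

Local Open Scope ereal_scope.
Lemma int2 n (R : realType) (mu : {measure set (seqspace n) -> \bar R})
  (G : 'I_n.+1 -> 'I_n.+1 -> R) : (forall a b, (0 <= G a b)%R) ->
  \int[mu]_x (G (x 0%N) (x 1%N))%:E =
  \sum_a \sum_b (G a b)%:E * mu (S2 a b).
Proof.
move=> G0.
have E : forall x : seqspace n, (G (x 0%N) (x 1%N))%:E =
    \sum_a \sum_b ((G a b) * \1_(S2 a b) x)%:E.
  move=> x; rewrite (bigD1 (x 0%N)) //= (bigD1 (x 1%N)) //=.
  rewrite indicE mem_set // mulr1 big1 ?adde0; last first.
    by move=> b hb; rewrite indicE memNset ?mulr0 // => -[_ /eqP]; rewrite eq_sym (negbTE hb).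
  rewrite big1 ?adde0 // => a ha; rewrite big1 // => b _.
  by rewrite indicE memNset ?mulr0 // => -[/eqP]; rewrite eq_sym (negbTE ha).
under eq_integral do rewrite E.
rewrite ge0_integral_sum //; last first.
- move=> a x _; apply: sume_ge0 => b _; rewrite lee_fin mulr_ge0 //.
- move=> a; apply: emeasurable_sum => b; apply/measurable_EFinP.
  apply: measurable_funM => //; apply: measurable_indic; exact: S2_meas.
apply: eq_bigr => a _.
rewrite ge0_integral_sum //; last first.
- by move=> b x _; rewrite lee_fin mulr_ge0.
- move=> b; apply/measurable_EFinP.
  apply: measurable_funM => //; apply: measurable_indic; exact: S2_meas.
apply: eq_bigr => b _.
rewrite (integralZl_indic _ (fun _ => S2 a b)) //; last first.
- exact: S2_meas.
- by move=> h; exfalso; move: h; rewrite real_ltNge ?G0 ?num_real.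
by rewrite integral_indic ?setIT //; exact: S2_meas.
Qed.

Lemma PS2E n (R : realType) (P : probability (seqspace n) R) (S : set (seqspace n)) :
  measurable S -> P S = (fine (P S))%:E.
Proof.
move=> mS; rewrite fineK // ge0_fin_numE ?measure_ge0 //.
exact: (le_lt_trans (probability_le1 P mS) (ltey _)).
Qed.

Lemma q_ge0 n (R : realType) (P : probability (seqspace n) R) (S : set (seqspace n)) :
  (0 <= fine (P S))%R.
Proof. by apply: fine_ge0; exact: measure_ge0. Qed.

Lemma int2P n (R : realType) (P : probability (seqspace n) R)
  (G : 'I_n.+1 -> 'I_n.+1 -> R) : (forall a b, (0 <= G a b)%R) ->
  \int[P]_x (G (x 0%N) (x 1%N))%:E =
  (\sum_a \sum_b G a b * fine (P (S2 a b)))%:E.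
Proof.
move=> G0; rewrite int2 // -sumEFin; apply: eq_bigr => a _.
rewrite -sumEFin; apply: eq_bigr => b _.
by rewrite EFinM -(PS2E P (S2_meas a b)).
Qed.

Lemma q_sum1 n (R : realType) (P : probability (seqspace n) R) :
  (\sum_a \sum_b fine (P (S2 a b)) = 1)%R.
Proof.
have := @int2P n R P (fun _ _ => 1%R) (fun _ _ => ler01).
rewrite integral_cst // [X in _ * X](_ : _ = 1) ?mul1e; last exact: probability_setT.
move=> -[] ->.
by apply: eq_bigr => a _; apply: eq_bigr => b _; rewrite mul1r.
Qed.

Lemma int_coord n (R : realType) (P : probability (seqspace n) R) k a :
  \int[P]_x ((x k == a)%:R)%:E = P [set x : seqspace n | x k = a].
Proof.
transitivity (P ([set x : seqspace n | x k = a] `&` setT)); last by rewrite setIT.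
rewrite -integral_indic //; last exact: cyl_meas.
apply: eq_integral => x _; rewrite indicE.
by case: (x k =P a) => h; [rewrite mem_set | rewrite memNset].
Qed.

Lemma q_marg n (R : realType) (P : probability (seqspace n) R) :
  (forall B : set (seqspace n), measurable B -> P (@Defs.shift n @^-1` B) = P B) ->
  forall a, (\sum_b fine (P (S2 a b)) = \sum_b fine (P (S2 b a)))%R.
Proof.
move=> Hinv a.
have h0 := @int2P n R P (fun a' b => (a' == a)%:R) (fun _ _ => ler0n _ _).
have h1 := @int2P n R P (fun a' b => (b == a)%:R) (fun _ _ => ler0n _ _).
rewrite /= int_coord in h0; rewrite /= int_coord in h1.
have := Hinv _ (cyl_meas 0%N a).
rewrite (_ : @Defs.shift n @^-1` [set x | x 0%N = a] = [set x | x 1%N = a]) //.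
have e0 : (\sum_a0 \sum_b (a0 == a)%:R * fine (P (S2 a0 b)) = \sum_b fine (P (S2 a b)))%R.
  rewrite (bigD1 a) //=.
  rewrite [X in (_ + X)%R](_ : _ = 0%R) ?addr0; last first.
    by apply: big1 => a0 Ha0; apply: big1 => b _; rewrite (negbTE Ha0) mul0r.
  by apply: eq_bigr => b _; rewrite eqxx mul1r.
have e1 : (\sum_a0 \sum_b (b == a)%:R * fine (P (S2 a0 b)) = \sum_a0 fine (P (S2 a0 a)))%R.
  apply: eq_bigr => a0 _; rewrite (bigD1 a) //= eqxx mul1r big1 ?addr0 // => b Hb.
  by rewrite (negbTE Hb) mul0r.
by rewrite h0 h1 e0 e1 => -[] ->.
Qed.

Lemma q_supp n (R : realType) (A : 'M[R]_n.+1) (P : probability (seqspace n) R) :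
  P (OmegaA A) = 1 -> forall a b, A a b != 1%R -> fine (P (S2 a b)) = 0%R.
Proof.
move=> HO a b Hab.
have D : S2 a b `&` OmegaA A = set0.
  apply/seteqP; split => // x [[/= h0 h1] /(_ 0%N)].
  by rewrite h0 h1 => /eqP; rewrite (negbTE Hab).
have L : (P (S2 a b) + P (OmegaA A) <= 1)%E.
  have E := measureU P (S2_meas a b) (Omega_meas A) D.
  have L1 := probability_le1 P (measurableU _ _ (S2_meas a b) (Omega_meas A)).
  rewrite E in L1; exact: L1.
rewrite HO (PS2E P (S2_meas a b)) -EFinD lee_fin in L.
apply/eqP; rewrite eq_le; apply/andP; split; last exact: q_ge0.
by rewrite -(lerD2r 1%R) add0r.
Qed.

Local Close Scope ereal_scope.


Definition ptg n m (g : 'I_m.+1 -> 'I_n.+1) (t : nat) : seqspace n :=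
  fun k => g (inZp (t + k)).

Definition mug n (R : realType) m (g : 'I_m.+1 -> 'I_n.+1) :=
  @msum _ (seqspace n) R (fun t => @dirac _ (seqspace n) (ptg g t) R) m.+1.

Definition Pg n (R : realType) m (g : 'I_m.+1 -> 'I_n.+1) : probability (seqspace n) R :=
  mnormalize (mug R g) (@dirac _ (seqspace n) (ptg g 0) R).

Lemma mugE n (R : realType) m (g : 'I_m.+1 -> 'I_n.+1) S :
  mug R g S = (\sum_(t < m.+1) (ptg g t \in S)%:R)%:E.
Proof. by rewrite /mug /msum -sumEFin; apply: eq_bigr => t _; exact: diracE. Qed.

Lemma PgE n (R : realType) m (g : 'I_m.+1 -> 'I_n.+1) S :
  Pg R g S = ((\sum_(t < m.+1) (ptg g t \in S)%:R) / m.+1%:R)%:E.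
Proof.
have hT : mug R g setT = (m.+1%:R)%:E.
  rewrite mugE; congr (_%:E); under eq_bigr do rewrite mem_set //.
  by rewrite sumr_const card_ord.
rewrite /Pg /= /mnormalize; case: ifPn => [H|_].
  have H' : (mug R g setT == 0) || (mug R g setT == +oo%E) := H.
  by move: H'; rewrite hT eqe pnatr_eq0.
transitivity (mug R g S * (fine (mug R g setT))^-1%:E)%E; first by [].
by rewrite hT mugE -EFinM.
Qed.

Lemma ptg_shift n m (g : 'I_m.+1 -> 'I_n.+1) t :
  Defs.shift (ptg g t) = ptg g t.+1.
Proof. by apply/funext => k; rewrite /Defs.shift /ptg addSnnS. Qed.

Lemma ptg_period n m (g : 'I_m.+1 -> 'I_n.+1) : ptg g m.+1 = ptg g 0.
Proof.
apply/funext => k; rewrite /ptg; congr (g _); apply/val_inj => /=.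
by rewrite modnDl.
Qed.

Lemma inZp_ord m (t : 'I_m.+1) : inZp t = t.
Proof. by apply/val_inj => /=; rewrite modn_small. Qed.

Lemma ptg_Omega n (R : realType) (A : 'M[R]_n.+1) m (g : 'I_m.+1 -> 'I_n.+1) :
  admissible_cycle A g -> forall t, OmegaA A (ptg g t).
Proof.
move=> [H1 H2] t k; rewrite /ptg addnS.
set j := (t + k)%N.
have hj : (j %% m.+1 < m.+1)%N by rewrite ltn_mod.
have hS : (j.+1 %% m.+1 = (j %% m.+1).+1 %% m.+1)%N.
  by rewrite -addn1 -modnDml addn1.
case: (ltngtP (j %% m.+1) m) => hr.
- have e1 : inZp j = inord (j %% m.+1) :> 'I_m.+1.
    by apply/val_inj; rewrite /= inordK.
  have e2 : inZp j.+1 = inord (j %% m.+1).+1 :> 'I_m.+1.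
    by apply/val_inj; rewrite /= inordK // hS modn_small.
  by rewrite e1 e2; apply: H1.
- by move: hj; rewrite ltnS leqNgt hr.
- have e1 : inZp j = ord_max :> 'I_m.+1 by apply/val_inj; rewrite /= hr.
  have e2 : inZp j.+1 = ord0 :> 'I_m.+1.
    by apply/val_inj; rewrite /= hS hr modnn.
  by rewrite e1 e2.
Qed.


Lemma Pg_inv n (R : realType) m (g : 'I_m.+1 -> 'I_n.+1) (B : set (seqspace n)) :
  Pg R g (@Defs.shift n @^-1` B) = Pg R g B.
Proof.
rewrite !PgE; congr ((_ / _)%:E).
have h t : (ptg g t \in @Defs.shift n @^-1` B) = (ptg g t.+1 \in B).
  by rewrite -ptg_shift.
under eq_bigr do rewrite h.
rewrite big_ord_recr big_ord_recl /= addrC; congr (_ + _).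
  by congr ((_ \in B)%:R); exact: ptg_period.
Qed.

Lemma Pg_erg n (R : realType) m (g : 'I_m.+1 -> 'I_n.+1) (B : set (seqspace n)) :
  @Defs.shift n @^-1` B = B -> Pg R g B = 0%E \/ Pg R g B = 1%E.
Proof.
move=> HB.
have h t : (ptg g t \in B) = (ptg g 0 \in B).
  elim: t => // t IH; rewrite -ptg_shift -IH.
  by rewrite -{2}HB.
rewrite PgE; under eq_bigr do rewrite h.
rewrite sumr_const card_ord.
case: (ptg g 0 \in B); [right|left]; last by rewrite mul0rn mul0r.
by rewrite divff ?pnatr_eq0.
Qed.

Lemma Pg_Omega n (R : realType) (A : 'M[R]_n.+1) m (g : 'I_m.+1 -> 'I_n.+1) :
  admissible_cycle A g -> Pg R g (OmegaA A) = 1%E.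
Proof.
move=> Hg; rewrite PgE.
have h t : (ptg g t \in OmegaA A) = true by rewrite mem_set //; exact: ptg_Omega Hg t.
under eq_bigr do rewrite h.
by rewrite sumr_const card_ord divff ?pnatr_eq0.
Qed.

Lemma Pg_ie n (R : realType) (A : 'M[R]_n.+1) m (g : 'I_m.+1 -> 'I_n.+1) :
  admissible_cycle A g -> invariant_ergodic_on A (Pg R g).
Proof.
move=> Hg; split.
- exact: Pg_Omega.
- by move=> B _; exact: Pg_inv.
- by move=> B _; exact: Pg_erg.
Qed.


Lemma mulE (R : realType) n (A B : 'M[R]_n.+1) i j :
  (A * B) i j = \sum_k A i k * B k j.
Proof. by rewrite -mulmxE mxE. Qed.

Lemma powA_nat (R : realType) n (A : 'M[R]_n.+1) :
  zero_one_mx A -> forall k i j, (A ^+ k) i j \is a Num.nat.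
Proof.
move=> A01; elim=> [|k IH] i j.
  by rewrite expr0 mxE natr_nat.
rewrite exprSr mulE; apply: rpred_sum => l _; apply: rpredM => //.
by case: (A01 l j) => ->; [exact: nat_num0 | exact: nat_num1].
Qed.

Lemma A_ge0 (R : realType) n (A : 'M[R]_n.+1) :
  zero_one_mx A -> forall i j, 0 <= A i j.
Proof. by move=> A01 i j; case: (A01 i j) => ->. Qed.

Definition walk (R : realType) n (A : 'M[R]_n.+1) (f : nat -> 'I_n.+1) (L : nat) :=
  forall t, (t < L)%N -> A (f t) (f t.+1) = 1.

Lemma walk_exists (R : realType) n (A : 'M[R]_n.+1) :
  zero_one_mx A -> forall k i j, 0 < (A ^+ k) i j ->
  exists f, [/\ f 0%N = i, f k = j & walk A f k].
Proof.
move=> A01; elim=> [|k IH] i j.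
  rewrite expr0 mxE; case: eqP => [<-|]; last by rewrite ltxx.
  by move=> _; exists (fun _ => i); split.
rewrite exprSr mulE => Hs.
have [l Hl] : exists l, 0 < (A ^+ k) i l * A l j.
  apply/not_existsP => H; move: Hs; rewrite ltNge => /negP; apply.
  by apply: sumr_le0 => l _; rewrite leNgt; apply/negP => /(H l).
have Alj : A l j = 1.
  by case: (A01 l j) => // e; move: Hl; rewrite e mulr0 ltxx.
move: Hl; rewrite Alj mulr1 => /IH [f [f0 fk fw]].
exists (fun t => if (t <= k)%N then f t else j); split.
- by rewrite leq0n.
- by rewrite ltnn.
move=> t ht; rewrite ltnS in ht.
case: (ltnP t k) => htk.
  by rewrite (ltnW htk); apply: fw.
have -> : t = k by apply/eqP; rewrite eqn_leq ht htk.
by rewrite leqnn fk.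
Qed.

Lemma Au_entry (R : realType) n (A : 'M[R]_n.+1) lam (u : 'cV[R]_n.+1) :
  A *m u = lam *: u -> forall i, \sum_j A i j * u j ord0 = lam * u i ord0.
Proof. by move=> H i; have := congr1 (fun M : 'M[R]_(n.+1,1) => M i ord0) H; rewrite !mxE. Qed.

Lemma ATv_entry (R : realType) n (A : 'M[R]_n.+1) lam (v : 'cV[R]_n.+1) :
  A^T *m v = lam *: v -> forall j, \sum_i A i j * v i ord0 = lam * v j ord0.
Proof.
move=> H j; have := congr1 (fun M : 'M[R]_(n.+1,1) => M j ord0) H; rewrite !mxE => <-.
by apply: eq_bigr => i _; rewrite mxE.
Qed.

Lemma pos_sum_one (R : realType) n (F : 'I_n.+1 -> R) :
  (forall i, F i = 0 \/ F i = 1) -> forall w : 'I_n.+1 -> R,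
  0 < \sum_i F i * w i -> exists i, F i = 1.
Proof.
move=> F01 w Hs; apply/not_existsP => H; move: Hs.
rewrite big1 ?ltxx // => i _.
by case: (F01 i) => [->|/H //]; rewrite mul0r.
Qed.

Lemma prim_K (R : realType) n (A : 'M[R]_n.+1) lam (v : 'cV[R]_n.+1) :
  zero_one_mx A -> primitive_mx A -> 0 < lam -> (forall i, 0 < v i ord0) ->
  A^T *m v = lam *: v ->
  exists K, (0 < K)%N /\ forall i j, 0 < (A ^+ K) i j.
Proof.
move=> A01 [k Hk] lam0 v0 HATv.
exists k.+1; split => // i j.
have [l Hl] : exists l, A l j = 1.
  apply: (@pos_sum_one R n (fun l => A l j) (fun l => A01 l j) (fun l => v l ord0)).
  by rewrite (ATv_entry HATv) mulr_gt0.
rewrite exprSr mulE (bigD1 l) //= Hl mulr1.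
have : 0 <= \sum_(i0 | i0 != l) (A ^+ k) i i0 * A i0 j.
  apply: sumr_ge0 => i0 _; apply: mulr_ge0; last exact: A_ge0.
  exact: natr_ge0 (powA_nat A01 _ _ _).
have := Hk i l; lra.
Qed.

Definition wcat n (f1 f2 : nat -> 'I_n.+1) (L1 : nat) : nat -> 'I_n.+1 :=
  fun t => if (t <= L1)%N then f1 t else f2 (t - L1)%N.

Lemma wcat_ge n (f1 f2 : nat -> 'I_n.+1) L1 t :
  f1 L1 = f2 0%N -> (L1 <= t)%N -> wcat f1 f2 L1 t = f2 (t - L1)%N.
Proof.
move=> J ht; rewrite /wcat; case: leqP => // h.
have -> : t = L1 by apply/eqP; rewrite eqn_leq h ht.
by rewrite subnn.
Qed.

Lemma wcat_walk (R : realType) n (A : 'M[R]_n.+1) f1 f2 L1 L2 :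
  walk A f1 L1 -> walk A f2 L2 -> f1 L1 = f2 0%N -> walk A (wcat f1 f2 L1) (L1 + L2).
Proof.
move=> w1 w2 J t ht; case: (ltnP t L1) => h.
  by rewrite /wcat (ltnW h) h; apply: w1.
rewrite !wcat_ge // ?(leqW h) // subSn //; apply: w2.
by rewrite ltn_subLR.
Qed.

Lemma wcat_sum (R : realType) n (F : 'I_n.+1 -> R) f1 f2 L1 L2 :
  f1 L1 = f2 0%N ->
  \sum_(t < L1 + L2) F (wcat f1 f2 L1 t) =
  \sum_(t < L1) F (f1 t) + \sum_(t < L2) F (f2 t).
Proof.
move=> J; rewrite big_split_ord /=; congr (_ + _).
  by apply: eq_bigr => i _; rewrite /wcat /= ltnW.
apply: eq_bigr => i _; rewrite /= wcat_ge ?leq_addr //.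
by rewrite addKn.
Qed.

Lemma wcat0 n (f1 f2 : nat -> 'I_n.+1) L1 : wcat f1 f2 L1 0%N = f1 0%N.
Proof. by []. Qed.

Lemma wcatL n (f1 f2 : nat -> 'I_n.+1) L1 L2 :
  f1 L1 = f2 0%N -> wcat f1 f2 L1 (L1 + L2) = f2 L2.
Proof. by move=> J; rewrite wcat_ge ?leq_addr // addKn. Qed.

Lemma cyc_zero (R : realType) n (A : 'M[R]_n.+1) (u : 'cV[R]_n.+1) c f L :
  cycle_average_const A u c -> walk A f L -> (0 < L)%N -> f L = f 0%N ->
  \sum_(t < L) (u (f t) ord0 - c) = 0.
Proof.
move=> Hc w; case: L w => // m w _ fL.
have adm : admissible_cycle A (fun i : 'I_m.+1 => f i).
  split.
    by move=> k hk; rewrite !inordK ?ltnS // ?(ltnW hk) //; apply: w; rewrite ltnS ltnW.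
  by rewrite /= -fL; apply: w.
have H := Hc m _ adm.
have Hs : \sum_(i < m.+1) u (f i) ord0 = m.+1%:R * c.
  by rewrite -H mulrA divff ?mul1r // pnatr_eq0.
by rewrite sumrB Hs sumr_const card_ord mulr_natl subrr.
Qed.

Lemma potential (R : realType) n (A : 'M[R]_n.+1) (u : 'cV[R]_n.+1) c K :
  zero_one_mx A -> (0 < K)%N -> (forall i j, 0 < (A ^+ K) i j) ->
  cycle_average_const A u c ->
  exists h : 'I_n.+1 -> R, forall a b, A a b = 1 -> u a ord0 - c = h b - h a.
Proof.
move=> A01 K0 HK Hc.
have Z : forall j, {f | [/\ f 0%N = j, f K = ord0 & walk A f K]}.
  by move=> j; apply: cid; apply: walk_exists.
pose F (i : 'I_n.+1) := u i ord0 - c.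
exists (fun j => - \sum_(t < K) F (sval (Z j) t)).
move=> a b Hab.
have [y [y0 yK yw]] := walk_exists A01 (HK ord0 a).
case: (svalP (Z a)) => za0 zaK zaw.
case: (svalP (Z b)) => zb0 zbK zbw.
set za := sval (Z a) in za0 zaK zaw *.
set zb := sval (Z b) in zb0 zbK zbw *.
pose e (t : nat) := if t == 0%N then a else b.
have ew : walk A e 1 by move=> t; rewrite ltnS leqn0 => /eqP ->.
have J1 : zb K = y 0%N by rewrite zbK y0.
have w1 : walk A (wcat zb y K) (K + K) by exact: wcat_walk.
have J2 : e 1%N = wcat zb y K 0%N by rewrite wcat0 zb0.
have c1 := cyc_zero Hc (wcat_walk ew w1 J2) (ltn0Sn _).
rewrite wcatL // wcatL // yK in c1.
have {}c1 := c1 erefl.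
rewrite (wcat_sum (fun i => u i ord0 - c)) // /= (wcat_sum (fun i => u i ord0 - c)) // big_ord1 in c1.
have J3 : za K = y 0%N by rewrite zaK y0.
have c2 := cyc_zero Hc (wcat_walk zaw yw J3) (ltn_addr K K0).
rewrite wcatL // wcat0 yK za0 in c2.
have {}c2 := c2 erefl.
rewrite (wcat_sum (fun i => u i ord0 - c)) // in c2.
move: c1 c2; rewrite /e /= -/(F a).
rewrite (_ : \sum_(t < K) (u (zb t) ord0 - c) = \sum_(t < K) F (zb t)) //.
rewrite (_ : \sum_(t < K) (u (za t) ord0 - c) = \sum_(t < K) F (za t)) //.
rewrite (_ : \sum_(t < K) (u (y t) ord0 - c) = \sum_(t < K) F (y t)) //.
rewrite -/(F a); lra.
Qed.

Lemma c_formula (R : realType) n (A : 'M[R]_n.+1) lam (u v : 'cV[R]_n.+1) c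
  (h : 'I_n.+1 -> R) :
  zero_one_mx A -> 0 < lam -> A *m u = lam *: u -> A^T *m v = lam *: v ->
  \sum_i u i ord0 * v i ord0 = 1 ->
  (forall a b, A a b = 1 -> u a ord0 - c = h b - h a) ->
  c = \sum_i (u i ord0 * v i ord0) * u i ord0.
Proof.
move=> A01 lam0 HAu HATv Huv hp.
have E a b : A a b * (u a ord0 - c) = A a b * (h b - h a).
  by case: (A01 a b) => e; [rewrite e !mul0r | rewrite e !mul1r (hp a b e)].
pose X := \sum_a \sum_b v a ord0 * A a b * u b ord0 * (u a ord0 - c).
have X1 : X = lam * \sum_a v a ord0 * u a ord0 * (u a ord0 - c).
  rewrite /X mulr_sumr; apply: eq_bigr => a _.
  transitivity (v a ord0 * (u a ord0 - c) * \sum_b A a b * u b ord0).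
    by rewrite mulr_sumr; apply: eq_bigr => b _; ring.
  by rewrite (Au_entry HAu); ring.
have X2 : X = 0.
  transitivity (\sum_a \sum_b v a ord0 * A a b * u b ord0 * h b -
                \sum_a \sum_b v a ord0 * A a b * u b ord0 * h a).
    rewrite -sumrB; apply: eq_bigr => a _; rewrite -sumrB; apply: eq_bigr => b _.
    transitivity (v a ord0 * u b ord0 * (A a b * (u a ord0 - c))); first ring.
    rewrite E; ring.
  have -> : \sum_a \sum_b v a ord0 * A a b * u b ord0 * h b =
            \sum_b lam * (v b ord0 * u b ord0 * h b).
    rewrite exchange_big; apply: eq_bigr => b _.
    transitivity (u b ord0 * h b * \sum_a A a b * v a ord0).
      by rewrite mulr_sumr; apply: eq_bigr => a _; ring.
    by rewrite (ATv_entry HATv); ring.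
  have -> : \sum_a \sum_b v a ord0 * A a b * u b ord0 * h a =
            \sum_a lam * (v a ord0 * u a ord0 * h a).
    apply: eq_bigr => a _.
    transitivity (v a ord0 * h a * \sum_b A a b * u b ord0).
      by rewrite mulr_sumr; apply: eq_bigr => b _; ring.
    by rewrite (Au_entry HAu); ring.
  by rewrite subrr.
have : \sum_a v a ord0 * u a ord0 * (u a ord0 - c) = 0.
  by apply/eqP; rewrite -(mulrI_eq0 _ (lregP (lt0r_neq0 lam0))) -X1 X2.
have -> : \sum_a v a ord0 * u a ord0 * (u a ord0 - c) =
   \sum_i (u i ord0 * v i ord0) * u i ord0 - c * \sum_i u i ord0 * v i ord0.
  rewrite mulr_sumr -sumrB; apply: eq_bigr => i _; ring.
rewrite Huv mulr1 => /eqP; rewrite subr_eq0 => /eqP ->; done.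
Qed.

Lemma powu (R : realType) n (A : 'M[R]_n.+1) lam (u : 'cV[R]_n.+1) :
  A *m u = lam *: u -> forall k, A ^+ k *m u = lam ^+ k *: u.
Proof.
move=> HAu; elim=> [|k IH]; first by rewrite expr0 expr0 scale1r mul1mx.
by rewrite exprS -mulmxE -mulmxA IH -scalemxAr HAu scalerA exprSr.
Qed.

Lemma powA_ge1 (R : realType) n (A : 'M[R]_n.+1) K :
  zero_one_mx A -> (forall i j, 0 < (A ^+ K) i j) -> forall i j, 1 <= (A ^+ K) i j.
Proof.
move=> A01 HK i j; have := HK i j.
have /natrP [m ->] := powA_nat A01 K i j.
by rewrite ltr0n ler1n.
Qed.

Lemma lam1_n0 (R : realType) n (A : 'M[R]_n.+1) lam (u : 'cV[R]_n.+1) K :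
  zero_one_mx A -> (forall i j, 0 < (A ^+ K) i j) ->
  (forall i, 0 < u i ord0) -> A *m u = lam *: u -> \sum_i u i ord0 = 1 ->
  lam = 1 -> n = 0%N.
Proof.
move=> A01 HK u0 HAu Hu1 l1.
have Hi i : 1 <= u i ord0.
  have := congr1 (fun M : 'M[R]_(n.+1,1) => M i ord0) (powu HAu K).
  rewrite !mxE l1 expr1n mul1r => <-.
  rewrite -Hu1; apply: ler_sum => j _.
  have := powA_ge1 A01 HK i j; have := u0 j; nra.
have : (\sum_(i < n.+1) (1 : R)) <= 1 by rewrite -{2}Hu1; apply: ler_sum.
by rewrite sumr_const card_ord -[X in _ <= X]/(1%:R) ler_nat; case: n {A A01 HK u0 HAu Hu1 Hi u}.
Qed.

Lemma walk_ind (R : realType) n (A : 'M[R]_n.+1) f L (Q : nat -> 'I_n.+1 -> Prop) :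
  walk A f L -> Q 0%N (f 0%N) ->
  (forall t a b, A a b = 1 -> Q t a -> Q t.+1 b) -> Q L (f L).
Proof.
move=> w Q0 HQ.
suff : forall t, (t <= L)%N -> Q t (f t) by apply.
elim=> // t IH ht; apply: (HQ t (f t)); first exact: w.
by apply: IH; rewrite ltnW.
Qed.

Lemma FA2E (R : realType) n (A : 'M[R]_n.+1) lam (u : 'cV[R]_n.+1) a b :
  0 < lam -> 0 < u a ord0 ->
  u a ord0 * (1 - Pmx A lam u a b) = u a ord0 - A a b * u b ord0 / lam.
Proof.
move=> l0 ua; rewrite /Pmx; field.
by rewrite (lt0r_neq0 l0) (lt0r_neq0 ua).
Qed.

Lemma rows_to_const (R : realType) n (A : 'M[R]_n.+1) lam (u v : 'cV[R]_n.+1) K r :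
  zero_one_mx A -> (forall i j, 0 < (A ^+ K) i j) -> 0 < lam ->
  (forall i, 0 < u i ord0) -> A *m u = lam *: u ->
  (forall i, 0 < v i ord0) -> A^T *m v = lam *: v ->
  (forall i, \sum_j A i j = r) ->
  lam = r /\ exists M, forall i, u i ord0 = M.
Proof.
move=> A01 HK l0 u0 HAu v0 HATv Hr.
have lr : lam = r.
  have E : \sum_j \sum_i A i j * v i ord0 = \sum_j lam * v j ord0.
    by apply: eq_bigr => j _; rewrite (ATv_entry HATv).
  rewrite exchange_big /= -mulr_sumr in E.
  have E2 : \sum_i \sum_j A i j * v i ord0 = r * \sum_i v i ord0.
    rewrite mulr_sumr; apply: eq_bigr => i _; rewrite -mulr_suml Hr mulrC //.
  rewrite E2 in E.
  have vpos : 0 < \sum_i v i ord0.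
    by rewrite (bigD1 ord0) //= ltr_pwDl // sumr_ge0 // => i _; exact: ltW.
  by apply: (mulIf (lt0r_neq0 vpos)); rewrite -E.
split => //.
have [i0 Hmax] : exists i0, forall j, u j ord0 <= u i0 ord0.
  case: (@arg_maxP _ R _ ord0 xpredT (fun i => u i ord0)) => // i _ Hi.
  by exists i => j; exact: Hi.
set M := u i0 ord0.
have prop : forall a b, A a b = 1 -> u a ord0 = M -> u b ord0 = M.
  move=> a b Hab Ha.
  have S0 : \sum_j A a j * (M - u j ord0) = 0.
    transitivity (M * \sum_j A a j - \sum_j A a j * u j ord0).
      rewrite mulr_sumr -sumrB; apply: eq_bigr => j _; ring.
    by rewrite Hr (Au_entry HAu) Ha lr mulrC subrr.
  have Hpos : forall j, true -> 0 <= A a j * (M - u j ord0).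
    move=> j _; apply: mulr_ge0; first exact: A_ge0.
    by rewrite subr_ge0.
  have := psumr_eq0P Hpos S0 (i := b) isT.
  by rewrite Hab mul1r => /eqP; rewrite subr_eq0 => /eqP ->.
exists M => i.
have [f [f0 fK fw]] := walk_exists A01 (HK i0 i).
rewrite -fK; apply: (walk_ind (Q := fun _ a => u a ord0 = M) fw).
  by rewrite f0.
by move=> _ a b Hab; exact: prop.
Qed.

Lemma edges_to_rows (R : realType) n (A : 'M[R]_n.+1) lam (u : 'cV[R]_n.+1) K k :
  zero_one_mx A -> (0 < K)%N -> (forall i j, 0 < (A ^+ K) i j) -> 0 < lam ->
  (forall i, 0 < u i ord0) -> A *m u = lam *: u -> \sum_i u i ord0 = 1 ->
  (forall a b, A a b = 1 -> u a ord0 - u b ord0 / lam = k) ->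
  exists r, forall i, \sum_j A i j = r.
Proof.
move=> A01 K0 HK l0 u0 HAu Hu1 He.
have [l1|l1] := eqVneq lam 1.
  have n0 := lam1_n0 A01 HK u0 HAu Hu1 l1.
  subst n; exists (\sum_j A ord0 j) => i.
  by rewrite (ord1 i).
pose w i := (lam - 1) * u i ord0 - lam * k.
have Hw : forall a b, A a b = 1 -> w b = lam * w a.
  move=> a b Hab; have := He a b Hab; rewrite /w => E.
  have -> : u b ord0 = lam * (u a ord0 - k).
    by rewrite -E; field; rewrite lt0r_neq0.
  ring.
have w0 : forall i, w i = 0.
  move=> i; have [f [f0 fK fw]] := walk_exists A01 (HK i i).
  have := walk_ind (Q := fun t a => w a = lam ^+ t * w i) fw.
  rewrite f0 fK expr0 mul1r => /(_ erefl) H.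
  have {}H : w i = lam ^+ K * w i.
    apply: H => t a b Hab Ha; rewrite (Hw _ _ Hab) Ha exprS; ring.
  have : (lam ^+ K - 1) * w i = 0 by rewrite mulrBl mul1r -H subrr.
  move/eqP; rewrite mulf_eq0 subr_eq0 pexpr_eq1 ?(ltW l0) // (negbTE l1) /=.
  by move/eqP.
have lm1 : lam - 1 != 0 by rewrite subr_eq0.
set M := lam * k / (lam - 1).
have uM : forall i, u i ord0 = M.
  move=> i; have := w0 i; rewrite /w /M => E.
  apply: (mulfI lm1); rewrite mulrCA divff // mulr1; lra.
exists lam => i.
have := Au_entry HAu i.
under eq_bigr do rewrite uM.
rewrite uM -mulr_suml => E.
apply: (mulIf (lt0r_neq0 (u0 i))); by rewrite uM.
Qed.

Definition G2 (R : realType) n (A : 'M[R]_n.+1) lam (u : 'cV[R]_n.+1) a b :=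
  u a ord0 * (1 - Pmx A lam u a b).

Lemma G2_ge0 (R : realType) n (A : 'M[R]_n.+1) lam (u : 'cV[R]_n.+1) :
  zero_one_mx A -> 0 < lam -> (forall i, 0 < u i ord0) -> A *m u = lam *: u ->
  forall a b, 0 <= G2 A lam u a b.
Proof.
move=> A01 l0 u0 HAu a b; rewrite /G2 FA2E // subr_ge0 ler_pdivrMr // [u a ord0 * lam]mulrC.
rewrite -(Au_entry HAu a) (bigD1 b) //= lerDl.
by apply: sumr_ge0 => j _; apply: mulr_ge0; [exact: A_ge0|exact: ltW].
Qed.

Lemma FA_G2 (R : realType) n (A : 'M[R]_n.+1) lam (u : 'cV[R]_n.+1) x :
  FA A lam u x = G2 A lam u (x 0%N) (x 1%N).
Proof. by []. Qed.

Lemma sum_pick2 (R : realType) n (G : 'I_n.+1 -> 'I_n.+1 -> R) p q :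
  \sum_a \sum_b G a b * ((p == a) && (q == b))%:R = G p q.
Proof.
rewrite (bigD1 p) //= (bigD1 q) //= !eqxx mulr1.
rewrite big1 ?addr0; last by move=> b Hb; rewrite (eq_sym q) (negbTE Hb) andbF mulr0.
rewrite big1 ?addr0 // => a Ha; apply: big1 => b _.
by rewrite (eq_sym p) (negbTE Ha) mulr0.
Qed.

Lemma int_Pg (R : realType) n (A : 'M[R]_n.+1) lam (u : 'cV[R]_n.+1) m
  (g : 'I_m.+1 -> 'I_n.+1) :
  zero_one_mx A -> 0 < lam -> (forall i, 0 < u i ord0) -> A *m u = lam *: u ->
  admissible_cycle A g ->
  (\int[Pg R g]_x (FA A lam u x)%:E =
   ((1 - lam^-1) * ((m.+1%:R)^-1 * \sum_i u (g i) ord0))%:E)%E.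
Proof.
move=> A01 l0 u0 HAu Hg.
rewrite (int2P (Pg R g) (G2_ge0 A01 l0 u0 HAu)); congr (_%:E).
have q a b : fine (Pg R g (S2 a b)) =
   (\sum_(t < m.+1) ((ptg g t 0%N == a) && (ptg g t 1%N == b))%:R) / m.+1%:R.
  rewrite PgE /=; congr (_ / _); apply: eq_bigr => t _.
  suff -> : (ptg g t \in S2 a b) = ((ptg g t 0%N == a) && (ptg g t 1%N == b)) by [].
  apply/idP/idP.
    by rewrite inE => -[-> ->]; rewrite !eqxx.
  by case/andP => /eqP h0 /eqP h1; rewrite inE.
set N := m.+1%:R.
have ex3 (F : 'I_n.+1 -> 'I_n.+1 -> 'I_m.+1 -> R) :
    \sum_a \sum_b \sum_t F a b t = \sum_t \sum_a \sum_b F a b t.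
  transitivity (\sum_a \sum_t \sum_b F a b t).
    by apply: eq_bigr => a _; rewrite exchange_big.
  by rewrite exchange_big.
transitivity ((\sum_(t < m.+1) G2 A lam u (ptg g t 0%N) (ptg g t 1%N)) / N).
  transitivity ((\sum_a \sum_b \sum_(t < m.+1) G2 A lam u a b *
      ((ptg g t 0%N == a) && (ptg g t 1%N == b))%:R) / N).
    rewrite mulr_suml; apply: eq_bigr => a _; rewrite mulr_suml; apply: eq_bigr => b _.
    by rewrite q mulrA mulr_sumr.
  by rewrite ex3; congr (_ / _); apply: eq_bigr => t _; rewrite sum_pick2.
have p0 (t : 'I_m.+1) : ptg g t 0%N = g t by rewrite /ptg addn0 inZp_ord.
have p1 (t : 'I_m.+1) : ptg g t 1%N = g (ordS t).
  by rewrite /ptg; congr (g _); apply/val_inj; rewrite /= addn1.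
have Hedge (t : 'I_m.+1) : A (g t) (g (ordS t)) = 1.
  by have := ptg_Omega Hg t 0%N; rewrite p0 p1.
transitivity ((\sum_(t < m.+1) (u (g t) ord0 - u (g (ordS t)) ord0 / lam)) / N).
  congr (_ / _); apply: eq_bigr => t _.
  by rewrite p0 p1 /G2 FA2E // Hedge mul1r.
rewrite sumrB.
have -> : \sum_(t < m.+1) u (g (ordS t)) ord0 / lam = (\sum_(t < m.+1) u (g t) ord0) / lam.
  by rewrite -mulr_suml (reindex_inj (@ordS_inj _) (F := fun t => u (g t) ord0)).
rewrite /N; field.
by rewrite addrC natr1 pnatr_eq0 (lt0r_neq0 l0).
Qed.


Lemma int_ie (R : realType) n (A : 'M[R]_n.+1) lam (u : 'cV[R]_n.+1) c
  (h : 'I_n.+1 -> R) (P : probability (seqspace n) R) :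
  zero_one_mx A -> 0 < lam -> (forall i, 0 < u i ord0) -> A *m u = lam *: u ->
  (forall a b, A a b = 1 -> u a ord0 - c = h b - h a) ->
  invariant_ergodic_on A P ->
  (\int[P]_x (FA A lam u x)%:E = ((1 - lam^-1) * c)%:E)%E.
Proof.
move=> A01 l0 u0 HAu hp [HO Hinv _].
rewrite (int2P P (G2_ge0 A01 l0 u0 HAu)); congr (_%:E).
set q := fun a b => fine (P (S2 a b)).
have qs : forall a b, A a b != 1 -> q a b = 0 := q_supp HO.
have qm : forall a, \sum_b q a b = \sum_b q b a := q_marg Hinv.
have q1 : \sum_a \sum_b q a b = 1 := q_sum1 P.
have marg (f : 'I_n.+1 -> R) :
    \sum_a \sum_b f b * q a b = \sum_a \sum_b f a * q a b.
  rewrite exchange_big; apply: eq_bigr => b _.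
  by rewrite -!mulr_sumr qm.
have Gq a b : G2 A lam u a b * q a b = (u a ord0 - u b ord0 / lam) * q a b.
  case: (A01 a b) => e.
    have -> : q a b = 0 by apply: qs; rewrite e eq_sym oner_neq0.
    by rewrite !mulr0.
  by rewrite /G2 FA2E // e mul1r.
have Uq a b : u a ord0 * q a b = (c + h b - h a) * q a b.
  case: (A01 a b) => e.
    have -> : q a b = 0 by apply: qs; rewrite e eq_sym oner_neq0.
    by rewrite !mulr0.
  by congr (_ * _); have := hp a b e; lra.
have SU : \sum_a \sum_b u a ord0 * q a b = c.
  under eq_bigr do under eq_bigr do rewrite Uq.
  transitivity (c * (\sum_a \sum_b q a b) +
     (\sum_a \sum_b h b * q a b - \sum_a \sum_b h a * q a b)).
    rewrite mulr_sumr -sumrB -big_split /=; apply: eq_bigr => a _.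
    rewrite mulr_sumr -sumrB -big_split /=; apply: eq_bigr => b _; ring.
  by rewrite marg subrr addr0 q1 mulr1.
under eq_bigr do under eq_bigr do rewrite Gq.
transitivity (\sum_a \sum_b u a ord0 * q a b -
              lam^-1 * \sum_a \sum_b u b ord0 * q a b).
  rewrite mulr_sumr -sumrB; apply: eq_bigr => a _.
  rewrite mulr_sumr -sumrB; apply: eq_bigr => b _; ring.
by rewrite marg SU; ring.
Qed.

Lemma walk_adm (R : realType) n (A : 'M[R]_n.+1) f m :
  walk A f m.+1 -> f m.+1 = f 0%N -> admissible_cycle A (fun i : 'I_m.+1 => f i).
Proof.
move=> w fL; split.
  by move=> k hk; rewrite !inordK ?ltnS // ?(ltnW hk) //; apply: w; rewrite ltnS ltnW.
by rewrite /= -fL; apply: w.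
Qed.

Lemma succ_exists (R : realType) n (A : 'M[R]_n.+1) lam (u : 'cV[R]_n.+1) :
  zero_one_mx A -> 0 < lam -> (forall i, 0 < u i ord0) -> A *m u = lam *: u ->
  exists s : 'I_n.+1 -> 'I_n.+1, forall l, A l (s l) = 1.
Proof.
move=> A01 l0 u0 HAu.
have H : forall l, exists j, A l j = 1.
  move=> l; apply: (@pos_sum_one R n (fun j => A l j) (fun j => A01 l j) (fun j => u j ord0)).
  by rewrite (Au_entry HAu) mulr_gt0.
exists (fun l => sval (cid (H l))) => l.
exact: svalP (cid (H l)).
Qed.

Unset Implicit Arguments.

Theorem proposition3p3 (R : realType) (n : nat) (A : 'M[R]_n.+1)
  (lam : R) (u v : 'cV[R]_n.+1) :
  zero_one_mx A -> primitive_mx A ->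
  0 < lam ->
  (forall i, 0 < u i ord0) -> A *m u = lam *: u -> \sum_i u i ord0 = 1 ->
  (forall i, 0 < v i ord0) -> A^T *m v = lam *: v ->
  \sum_i u i ord0 * v i ord0 = 1 ->
  [/\ (forall P1 P2 : probability (seqspace n) R,
         invariant_ergodic_on A P1 -> invariant_ergodic_on A P2 ->
         (\int[P1]_x (FA A lam u x)%:E = \int[P2]_x (FA A lam u x)%:E)%E)
      <-> (exists c : R, 0 < c /\ cycle_average_const A u c),
      (forall c : R, cycle_average_const A u c ->
         c = \sum_i (u i ord0 * v i ord0) * u i ord0) &
      (exists k : R, forall x, OmegaA A x -> FA A lam u x = k)
      <-> (exists r : R, forall i, \sum_j A i j = r)].
Proof.
move=> A01 prim l0 u0 HAu Hu1 v0 HATv Huv.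
have [K [K0 HK]] := prim_K A01 prim l0 v0 HATv.
split.
- split.
  + move=> H12.
    have [n0|n1] := eqVneq n 0%N.
      subst n; exists 1; split; first exact: ltr01.
      move=> m g Hg.
      have -> : \sum_i u (g i) ord0 = \sum_(i < m.+1) (1 : R).
        by apply: eq_bigr => i _; rewrite (ord1 (g i)) -Hu1 big_ord1.
      by rewrite sumr_const card_ord mulVf // pnatr_eq0.
    have l1 : lam != 1.
      by apply/eqP => l1; move: n1; rewrite (lam1_n0 A01 HK u0 HAu Hu1 l1) eqxx.
    have [f [f0 fK fw]] := walk_exists A01 (HK ord0 ord0).
    case: K K0 HK f0 fK fw => // K' _ HK f0 fK fw.
    have adm0 := walk_adm fw (etrans fK (esym f0)).
    set g0 := (fun i : 'I_K'.+1 => f i) in adm0.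
    exists ((K'.+1%:R)^-1 * \sum_i u (g0 i) ord0); split.
      apply: mulr_gt0; first by rewrite invr_gt0 ltr0n.
      rewrite (bigD1 ord0) //=.
      have : 0 <= \sum_(i < K'.+1 | i != ord0) u (g0 i) ord0.
        by apply: sumr_ge0 => i _; exact: ltW.
      have := u0 (g0 ord0); lra.
    move=> m g Hg.
    have := H12 (Pg R g) (Pg R g0) (Pg_ie Hg) (Pg_ie adm0).
    rewrite (int_Pg A01 l0 u0 HAu Hg) (int_Pg A01 l0 u0 HAu adm0) => -[] E.
    apply: (mulfI _ E); rewrite subr_eq0 eq_sym invr_eq1 //.
  + move=> [c [c0 Hc]] P1 P2 H1 H2.
    have [h hp] := potential A01 K0 HK Hc.
    by rewrite (int_ie A01 l0 u0 HAu hp H1) (int_ie A01 l0 u0 HAu hp H2).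
- move=> c Hc; have [h hp] := potential A01 K0 HK Hc.
  exact: (c_formula A01 l0 HAu HATv Huv hp).
- split.
  + move=> [k Hk].
    apply: (edges_to_rows (k := k) A01 K0 HK l0 u0 HAu Hu1).
    move=> a b Hab.
    have [s Hs] := succ_exists A01 l0 u0 HAu.
    pose x : seqspace n := fun t => if t is t'.+1 then iter t' s b else a.
    have Hx : OmegaA A x by case => [|t] //=; rewrite Hs.
    have := Hk x Hx; rewrite FA_G2 /G2 FA2E // /x /= Hab mul1r //.
  + move=> [r Hr].
    have [lr [M uM]] := rows_to_const A01 HK l0 u0 HAu v0 HATv Hr.
    exists (M - M / lam) => x Hx.
    by rewrite FA_G2 /G2 FA2E // (Hx 0%N) mul1r !uM.
Qed.
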